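(* Let $X$ be a vector space over a field $\mathbb{k}$ and let $T:X\to X$ be a $\mathbb{k}$-linear map. Then $T$ has no non-trivial finite dimensional invariant subspaces if and only if there exist a set $A$, a subspace $Y$ of $\mathcal{R}^{(A)}$ invariant under $M^{(A)}$, and a linear bijection $J:X\to Y$ such that $JTx=M^{(A)}Jx$ for all $x\in X$ (i.e. $T$ is similar to the restriction of $M^{(A)}$ to an invariant subspace).
   Context: $\mathcal{R}=\mathbb{k}(t)$ is the field of rational functions in one variable over $\mathbb{k}$, and $M:\mathcal{R}\to\mathcal{R}$ is the $\mathbb{k}$-linear map $Mf(z)=zf(z)$. For a set $A$, $\mathcal{R}^{(A)}=\{f\in\mathcal{R}^A:\{\alpha\in A:f_\alpha\neq0\}\text{ is finite}\}$ is the algebraic direct sum of copies of $\mathcal{R}$ indexed by $A$, and $M^{(A)}:\mathcal{R}^{(A)}\to\mathcal{R}^{(A)}$ is defined by $(M^{(A)}f)_\alpha=Mf_\alpha$ for each $\alpha\in A$. A non-trivial subspace means a subspace different from $\{0\}$; a subspace $L$ is invariant for $T$ if $T(L)\subseteq L$. *)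

(* Defs.v *)
From HB Require Import structures.
From mathcomp Require Import all_boot all_order all_algebra.
From Stdlib Require Lists.List.
Set Implicit Arguments. Unset Strict Implicit. Unset Printing Implicit Defensive.
Import Order.TTheory GRing.Theory Num.Theory.
Local Open Scope ring_scope.

(* The field R = k(t) of rational functions in one variable over k. *)
Definition ratfun (k : fieldType) : Type := {fraction {poly k}}.

Definition poly2rat (k : fieldType) (p : {poly k}) : {fraction {poly k}} :=
  @tofrac {poly k} p.

Definition rscale (k : fieldType) (c : k) (f : {fraction {poly k}}) :
  {fraction {poly k}} := poly2rat c%:P * f.

Definition Mop (k : fieldType) (f : {fraction {poly k}}) : {fraction {poly k}} :=
  poly2rat 'X * f.

Definition finsupp (k : fieldType) (A : Type) (f : A -> {fraction {poly k}}) : Prop :=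
  exists s : list A, forall a, f a <> 0 -> List.In a s.

Definition MA (k : fieldType) (A : Type) (f : A -> {fraction {poly k}}) :
  A -> {fraction {poly k}} := fun a => Mop (f a).

Definition is_subspace_RA (k : fieldType) (A : Type)
  (Y : (A -> {fraction {poly k}}) -> Prop) : Prop :=
  (forall f, Y f -> finsupp f) /\
  Y (fun _ => 0) /\
  (forall (c : k) f g, Y f -> Y g -> Y (fun a => rscale c (f a) + g a)).

Definition is_subspace (k : fieldType) (X : lmodType k) (L : X -> Prop) : Prop :=
  L 0 /\ (forall (c : k) x y, L x -> L y -> L (c *: x + y)).

Definition fin_dim (k : fieldType) (X : lmodType k) (L : X -> Prop) : Prop :=
  exists s : seq X, (forall x, x \in s -> L x) /\
    (forall x, L x -> exists c : 'I_(size s) -> k, x = \sum_(i < size s) c i *: s`_i).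

Definition nontrivial (k : fieldType) (X : lmodType k) (L : X -> Prop) : Prop :=
  exists x, L x /\ x <> 0.

Definition is_invariant (X : Type) (T : X -> X) (L : X -> Prop) : Prop :=
  forall x, L x -> L (T x).

(* Main.v *)
Require Import Defs.
From HB Require Import structures.
From mathcomp Require Import all_boot all_order all_algebra.
From mathcomp Require Import boolp classical_sets.
From mathcomp Require Import ring.
Set Implicit Arguments. Unset Strict Implicit.
Import GRing.Theory.
Local Open Scope ring_scope.
Local Notation "x %:F" := (@tofrac _ x).
Section Pe.
Variables (k : fieldType) (X : lmodType k) (T : {linear X -> X}).

Definition itT i (x : X) := iter i T x.
Definition pe (p : {poly k}) (x : X) := \sum_(i < size p) p`_i *: itT i x.

Lemma itT_lin i c (x y : X) : itT i (c *: x + y) = c *: itT i x + itT i y.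
Proof. by elim: i => [//|i IH]; rewrite /itT /= -!/(itT _ _) IH linearP. Qed.

Lemma itT0 i : itT i 0 = 0.
Proof. by elim: i => [//|i IH]; rewrite /itT /= -!/(itT _ _) IH linear0. Qed.

Lemma itTS i (x : X) : itT i (T x) = T (itT i x).
Proof. by elim: i => [//|i IH]; rewrite /itT /= -!/(itT _ _) IH. Qed.

Lemma pe_ext n (p : {poly k}) (x : X) : (size p <= n)%N -> pe p x = \sum_(i < n) p`_i *: itT i x.
Proof.
move=> le; rewrite /pe (big_ord_widen n (fun i => p`_i *: itT i x)) //.
rewrite big_mkcond /=; apply: eq_bigr => i _.
case: ltnP => // h; by rewrite nth_default // scale0r.
Qed.

Lemma peD (p q : {poly k}) (x : X) : pe (p + q) x = pe p x + pe q x.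
Proof.
rewrite (@pe_ext (maxn (size p) (size q))) ?size_polyD //.
rewrite (@pe_ext (maxn (size p) (size q)) p) ?leq_maxl //.
rewrite (@pe_ext (maxn (size p) (size q)) q) ?leq_maxr //.
by rewrite -big_split; apply: eq_bigr => i _; rewrite coefD scalerDl.
Qed.

Lemma peZ c (p : {poly k}) (x : X) : pe (c *: p) x = c *: pe p x.
Proof.
rewrite (@pe_ext (size p)) ?size_scale_leq // /pe scaler_sumr.
by apply: eq_bigr => i _; rewrite coefZ scalerA.
Qed.

Lemma pe0p (x : X) : pe 0 x = 0.
Proof. by rewrite /pe size_poly0 big_ord0. Qed.

Lemma pe_lin (p : {poly k}) c (x y : X) : pe p (c *: x + y) = c *: pe p x + pe p y.
Proof.
rewrite /pe scaler_sumr -big_split; apply: eq_bigr => i _.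
by rewrite itT_lin scalerDr !scalerA mulrC.
Qed.

Lemma pe0 (p : {poly k}) : pe p 0 = 0.
Proof. by rewrite /pe big1 // => i _; rewrite itT0 scaler0. Qed.

Lemma peC c (x : X) : pe c%:P x = c *: x.
Proof.
rewrite (@pe_ext 1) ?size_polyC ?leq_b1 // big_ord1 coefC /=.
by [].
Qed.

Lemma peXl (p : {poly k}) (x : X) : pe ('X * p) x = T (pe p x).
Proof.
rewrite (@pe_ext (size p).+1); last first.
  by apply: leq_trans (size_polyMleq _ _) _; rewrite size_polyX.
rewrite big_ord_recl coefXM /= scale0r add0r /pe linear_sum.
by apply: eq_bigr => i _; rewrite coefXM /= linearZ.
Qed.

Lemma peT (p : {poly k}) (x : X) : pe p (T x) = T (pe p x).
Proof.
rewrite /pe linear_sum; apply: eq_bigr => i _.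
by rewrite itTS linearZ.
Qed.

Lemma peM (p q : {poly k}) (x : X) : pe (p * q) x = pe p (pe q x).
Proof.
elim/poly_ind: p q x => [|p c IH] q x; first by rewrite mul0r !pe0p.
rewrite mulrDl -mulrA mul_polyC peD IH peXl peZ peD.
by rewrite (mulrC p) peXl peT peC.
Qed.

Lemma pe1 (x : X) : pe 1 x = x.
Proof. by rewrite -polyC1 peC scale1r. Qed.

Lemma peN (p : {poly k}) (x : X) : pe (- p) x = - pe p x.
Proof. by rewrite -(scaleN1r p) peZ scaleN1r. Qed.

Lemma peB (p q : {poly k}) (x : X) : pe (p - q) x = pe p x - pe q x.
Proof. by rewrite peD peN. Qed.

Lemma peXn n (x : X) : pe ('X^n) x = itT n x.
Proof.
elim: n => [|n IH]; first by rewrite expr0 pe1.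
by rewrite exprS peXl IH.
Qed.

Lemma pe_sum (p : {poly k}) (I : Type) (s : seq I) (F : I -> X) :
  pe p (\sum_(i <- s) F i) = \sum_(i <- s) pe p (F i).
Proof.
elim: s => [|a s IH]; first by rewrite !big_nil pe0.
have h := pe_lin p 1 (F a) (\sum_(i <- s) F i); rewrite !scale1r in h.
by rewrite !big_cons h IH.
Qed.

End Pe.
Lemma torsion_free (k : fieldType) (X : lmodType k) (T : {linear X -> X}) :
  (~ exists L : X -> Prop,
       [/\ is_subspace L, nontrivial L, fin_dim L & @is_invariant X (fun x : X => T x) L]) ->
  forall (p : {poly k}) (x : X), p != 0 -> pe T p x = 0 -> x = 0.
Proof.
move=> H p x p0 px; have [//|x0] := eqVneq x 0; exfalso; apply: H.
set d := (size p).-1.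
have d1 : (1 <= d)%N.
  rewrite /d; case: (leqP (size p) 1) => [/size1_polyC pC|]; last by case: (size p) => [|[]].
  move: px p0; rewrite pC peC => /eqP; rewrite scaler_eq0 (negbTE x0) orbF => /eqP ->.
  by rewrite eqxx.
have sp : size p = d.+1.
  by rewrite /d prednK //; move: d1; rewrite /d; case: (size p).

exists (fun y => exists q : {poly k}, (size q <= d)%N /\ y = pe T q x); split.
- split; first by exists 0; rewrite size_poly0 pe0p.
  move=> c _ _ [q [qs ->]] [q' [qs' ->]]; exists (c *: q + q'); split.
    by rewrite (leq_trans (size_polyD _ _)) // geq_max qs' (leq_trans (size_scale_leq _ _)).
  by rewrite peD peZ.
- exists x; split; last by apply/eqP.
  by exists 1; rewrite size_poly1 pe1.
- exists (mkseq (fun i => itT T i x) d); split.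
    move=> y /mapP [i]; rewrite mem_iota add0n => /andP [_ id] ->.
    by exists 'X^i; rewrite size_polyXn peXn.
  move=> y [q [qs ->]]; rewrite size_mkseq; exists (fun i => q`_i).
  rewrite (pe_ext _ _ qs); apply: eq_bigr => i _; by rewrite nth_mkseq.
- move=> y [q [qs ->]]; exists (('X * q) %% p); split.
    by rewrite -ltnS -sp ltn_modp.
  rewrite -peXl {1}(divp_eq ('X * q) p) peD peM px pe0 add0r //.
Qed.
Lemma sum_ext (X : eqType) (V : nmodType) (s u : seq X) (F : X -> V) :
  uniq s -> uniq u -> {subset s <= u} -> (forall a, a \notin s -> F a = 0) ->
  \sum_(a <- u) F a = \sum_(a <- s) F a.
Proof.
move=> us uu su F0.
rewrite (eq_bigr (fun a => if a \in s then F a else 0)); last first.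
  by move=> a _; case: ifP => // /negbT /F0.
rewrite -big_mkcond -big_filter; apply: perm_big.
apply: uniq_perm; rewrite ?filter_uniq // => a; rewrite mem_filter.
by case: (boolP (a \in s)) => // /su ->.
Qed.

Section Rep.
Variables (k : fieldType) (X : lmodType k) (T : {linear X -> X}).

Definition indep (S : set X) := forall (s : seq X) (p : X -> {poly k}),
  uniq s -> (forall a, a \in s -> S a) -> \sum_(a <- s) pe T (p a) a = 0 ->
  forall a, a \in s -> p a = 0.

Definition Rep (S : set X) (x : X) (q : {poly k}) (s : seq X) (p : X -> {poly k}) :=
  [/\ q != 0, uniq s, (forall a, a \in s -> S a), (forall a, a \notin s -> p a = 0)
   & pe T q x = \sum_(a <- s) pe T (p a) a].

Lemma chain_in (F : set (set X)) (s : seq X) :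
  total_on F subset -> (forall a, a \in s -> (\bigcup_(Y in F) Y)%classic a) ->
  s = [::] \/ exists Y, F Y /\ forall a, a \in s -> Y a.
Proof.
move=> tot; elim: s => [|a s IH] H; first by left.
right; have [Y1 FY1 Y1a] := H a (mem_head _ _).
have [->|[Y2 [FY2 Y2s]]] := IH (fun b bs => H b (mem_behead (s := a :: s) bs)).
  by exists Y1; split => // b; rewrite inE => /eqP ->.
have [h|h] := tot _ _ FY1 FY2.
  by exists Y2; split => // b; rewrite inE => /orP [/eqP ->|/Y2s //]; apply: h.
by exists Y1; split => // b; rewrite inE => /orP [/eqP ->|/Y2s] //; apply: h.
Qed.

Lemma exists_max : exists S, indep S /\ forall B, (S `<` B)%classic -> ~ indep B.
Proof.
apply: Zorn_bigcup => F FP tot s p us sU s0 a ain.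
have [sn|[Y [FY Ys]]] := chain_in tot sU; first by rewrite sn in ain.
exact: (FP _ FY s p us Ys s0).
Qed.

Variables (S : set X) (indS : indep S) (maxS : forall B, (S `<` B)%classic -> ~ indep B).

Lemma span x : exists q s p, Rep S x q s p.
Proof.
case: (pselect (S x)) => Sx.
  exists 1, [:: x], (fun a => if a == x then 1 else 0); split => //.
  - exact: oner_neq0.
  - by move=> a; rewrite inE => /eqP ->.
  - by move=> a; rewrite inE => /negbTE ->.
  - by rewrite big_seq1 eqxx.
apply: contra_notP (maxS (B := (S `|` [set x])%classic) _); last first.
  split; first by move=> y Sy; left.
  by move=> h; apply: Sx; exact: (h x (or_intror erefl)).
move=> nG s p us sB s0 a ain.
case: (boolP (x \in s)) => xs; last first.
  apply: (indS us) s0 a ain => b bs; case: (sB b bs) => // eb.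
  by move: bs; rewrite eb (negbTE xs).
have remS : forall b, b \in rem x s -> S b.
  move=> b; rewrite (mem_rem_uniq _ us) inE => /andP [bx bs].
  by case: (sB b bs) => // eb; rewrite eb eqxx in bx.
move: s0; rewrite (big_rem _ xs) /= => s0.
case: (eqVneq (p x) 0) => px.
  move: s0; rewrite px pe0p add0r => s0.
  case: (eqVneq a x) => [->//|ax].
  by apply: (indS (rem_uniq _ us) remS s0); rewrite (mem_rem_uniq _ us) inE ax.
exfalso; apply: nG.
exists (p x), (rem x s), (fun b => if b \in rem x s then - p b else 0); split => //.
- exact: rem_uniq.
- by move=> b /negbTE ->.
- rewrite big_seq (eq_bigr (fun b => - pe T (p b) b)) => [|b bs]; last by rewrite bs peN.
  by rewrite sumrN -big_seq; apply/eqP; rewrite -addr_eq0 s0.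
Qed.

End Rep.
Lemma fld_aux (F : fieldType) (C Q Q' P P' : F) : Q != 0 -> Q' != 0 ->
  (C * (Q' * P) + Q * P') / (Q * Q') = C * (P / Q) + P' / Q'.
Proof. by move=> h h'; field; apply/andP. Qed.

Lemma in_In (X : eqType) (a : X) (s : seq X) : a \in s -> List.In a s.
Proof.
by elim: s => //= b s IH; rewrite inE => /orP [/eqP ->|/IH]; [left|right].
Qed.

Section J.
Variables (k : fieldType) (X : lmodType k) (T : {linear X -> X}).
Hypothesis TF : forall p x, p != 0 -> pe T p x = 0 -> x = 0.
Variables (S : set X) (indS : indep T S).
Hypothesis spanS : forall x, exists q s p, Rep T S x q s p.

Lemma rep_uniq x q s p q' s' p' :
  Rep T S x q s p -> Rep T S x q' s' p' -> forall a, q' * p a = q * p' a.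
Proof.
case=> q0 us sS ps e [q0' us' sS' ps' e'] a.
set u := undup (s ++ s').
have uu : uniq u := undup_uniq _.
have su : {subset s <= u} by move=> b bs; rewrite mem_undup mem_cat bs.
have su' : {subset s' <= u} by move=> b bs; rewrite mem_undup mem_cat bs orbT.
have uS : forall b, b \in u -> S b.
  by move=> b; rewrite mem_undup mem_cat => /orP [/sS|/sS'].
have E1 : pe T (q' * q) x = \sum_(b <- u) pe T (q' * p b) b.
  rewrite peM e pe_sum (sum_ext (F := fun b => pe T (q' * p b) b) us uu su); last first.
    by move=> b /ps ->; rewrite mulr0 pe0p.
  by apply: eq_bigr => b _; rewrite peM.
have E2 : pe T (q * q') x = \sum_(b <- u) pe T (q * p' b) b.
  rewrite peM e' pe_sum (sum_ext (F := fun b => pe T (q * p' b) b) us' uu su'); last first.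
    by move=> b /ps' ->; rewrite mulr0 pe0p.
  by apply: eq_bigr => b _; rewrite peM.
have : \sum_(b <- u) pe T (q' * p b - q * p' b) b = 0.
  rewrite (eq_bigr (fun b => pe T (q' * p b) b - pe T (q * p' b) b)) => [|b _]; last by rewrite peB.
  by rewrite sumrB -E1 -E2 mulrC subrr.
move/(indS uu uS) => h.
case: (boolP (a \in u)) => au; first by apply/eqP; rewrite -subr_eq0 h.
have as' : a \notin s by apply: contra au; apply: su.
have as'' : a \notin s' by apply: contra au; apply: su'.
by rewrite ps // ps' // !mulr0.
Qed.

Lemma spanT x : exists t : {poly k} * seq X * (X -> {poly k}), Rep T S x t.1.1 t.1.2 t.2.
Proof. by have [q [s [p h]]] := spanS x; exists (q, s, p). Qed.

Definition J x a : {fraction {poly k}} :=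
  let t := sval (cid (spanT x)) in (t.2 a)%:F / (t.1.1)%:F.

Lemma Jrep x q s p : Rep T S x q s p -> forall a, J x a = (p a)%:F / q%:F.
Proof.
move=> r a; rewrite /J; case: (cid (spanT x)) => [[[q0 s0] p0] r0] /=.
have h := rep_uniq r0 r a.
move: r0 r => [q00 _ _ _ _] [q0' _ _ _ _].
apply/eqP; rewrite eqr_div ?tofrac_eq0 // -!tofracM tofrac_eq; apply/eqP.
by rewrite mulrC h mulrC.
Qed.

Lemma rep_lin c x y q s p q' s' p' :
  Rep T S x q s p -> Rep T S y q' s' p' ->
  Rep T S (c *: x + y) (q * q') (undup (s ++ s')) (fun a => c *: (q' * p a) + q * p' a).
Proof.
case=> q0 us sS ps e [q0' us' sS' ps' e'].
set u := undup (s ++ s').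
have uu : uniq u := undup_uniq _.
have su : {subset s <= u} by move=> b bs; rewrite mem_undup mem_cat bs.
have su' : {subset s' <= u} by move=> b bs; rewrite mem_undup mem_cat bs orbT.
split => //.
- exact: mulf_neq0.
- by move=> b; rewrite mem_undup mem_cat => /orP [/sS|/sS'].
- move=> b; rewrite mem_undup mem_cat negb_or => /andP [bs bs'].
  by rewrite ps // ps' // !mulr0 scaler0 addr0.
rewrite (eq_bigr (fun b => c *: pe T (q' * p b) b + pe T (q * p' b) b)) => [|b _]; last first.
  by rewrite peD peZ.
rewrite big_split /= -scaler_sumr.
rewrite (sum_ext (F := fun b => pe T (q' * p b) b) us uu su); last first.
  by move=> b /ps ->; rewrite mulr0 pe0p.
rewrite (sum_ext (F := fun b => pe T (q * p' b) b) us' uu su'); last first.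
  by move=> b /ps' ->; rewrite mulr0 pe0p.
rewrite pe_lin; congr (_ *: _ + _).
  by rewrite mulrC peM e pe_sum; apply: eq_bigr => b _; rewrite peM.
by rewrite peM e' pe_sum; apply: eq_bigr => b _; rewrite peM.
Qed.

Lemma rep_T x q s p : Rep T S x q s p -> Rep T S (T x) q s (fun a => 'X * p a).
Proof.
case=> q0 us sS ps e; split => //.
  by move=> b /ps ->; rewrite mulr0.
rewrite peT e linear_sum; apply: eq_bigr => b _; by rewrite peXl.
Qed.

Lemma rep0 : Rep T S 0 1 [::] (fun _ => 0).
Proof. by split => //; [exact: oner_neq0 | rewrite pe0 big_nil]. Qed.

Lemma J_lin c x y : J (c *: x + y) = (fun a => rscale c (J x a) + J y a).
Proof.
have [q [s [p r]]] := spanS x; have [q' [s' [p' r']]] := spanS y.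
have nq : q%:F != 0 by rewrite tofrac_eq0; case: r.
have nq' : q'%:F != 0 by rewrite tofrac_eq0; case: r'.
apply: funext => a; rewrite (Jrep (rep_lin c r r')) (Jrep r) (Jrep r') /rscale /poly2rat.
rewrite tofracD -mul_polyC !tofracM.
move: nq nq'; move: (c%:P)%:F (q%:F) (q'%:F) (p a)%:F (p' a)%:F => C Q Q' P P' nq nq'.
exact: (@fld_aux _ C Q Q' P P' nq nq').
Qed.

Lemma J_T x : J (T x) = MA (J x).
Proof.
have [q [s [p r]]] := spanS x.
apply: funext => a; rewrite (Jrep (rep_T r)) /MA /Mop (Jrep r) /poly2rat.
by rewrite tofracM mulrA.
Qed.

Lemma J0 : J 0 = fun _ => 0.
Proof. by apply: funext => a; rewrite (Jrep rep0) tofrac0 mul0r. Qed.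

Lemma J_inj x y : J x = J y -> x = y.
Proof.
move=> exy; have h := J_lin (-1) y x.
set z := (-1) *: y + x in h.
have z0 : forall a, J z a = 0.
  move=> a; rewrite h exy /rscale /poly2rat polyCN tofracN tofrac1 mulN1r addNr //.
have [q [s [p r]]] := spanS z.
have p0 : forall a, p a = 0.
  move=> a; have := z0 a; rewrite (Jrep r) => /eqP; rewrite mulf_eq0 invr_eq0 !tofrac_eq0.
  by case: r => /negbTE -> _ _ _ _; rewrite orbF => /eqP.
have : z = 0.
  case: r => q0 _ _ _ e; apply: (TF q0); rewrite e big1 // => b _; by rewrite p0 pe0p.
by rewrite /z scaleN1r addrC => /eqP; rewrite subr_eq0 => /eqP.
Qed.

Lemma J_fin x : finsupp (J x).
Proof.
have [q [s [p r]]] := spanS x; exists s => a; rewrite (Jrep r a).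
case: (boolP (a \in s)) => [/in_In //|ns].
by case: r => _ _ _ ps _; rewrite ps // tofrac0 mul0r.
Qed.

End J.
Section Back.
Variables (k : fieldType) (X : lmodType k) (T : {linear X -> X}).
Variables (A : Type) (J : X -> A -> {fraction {poly k}}).
Hypothesis Jlin : forall (c : k) x y, J (c *: x + y) = (fun a => rscale c (J x a) + J y a).
Hypothesis Jinj : forall x y, J x = J y -> x = y.
Hypothesis JT : forall x, J (T x) = MA (J x).

Lemma BJ0 : J 0 = fun _ => 0.
Proof.
apply: funext => a; have := congr1 (fun f => f a) (Jlin 1 0 0).
rewrite scale1r addr0 /rscale /poly2rat /= polyC1 tofrac1 mul1r.
by move/(congr1 (fun z => z - J 0 a)); rewrite addrK subrr => <-.
Qed.

Lemma BJsum n (c : 'I_n -> k) (v : 'I_n -> X) a :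
  J (\sum_(i < n) c i *: v i) a = \sum_(i < n) (c i)%:P%:F * J (v i) a.
Proof.
elim: n c v => [|n IH] c v; first by rewrite !big_ord0 BJ0.
rewrite !big_ord_recr /= addrC Jlin /rscale /poly2rat IH addrC //.
Qed.

Lemma BJit i x a : J (itT T i x) a = ('X^i)%:F * J x a.
Proof.
elim: i => [|i IH]; first by rewrite expr0 tofrac1 mul1r.
rewrite /itT /= -/(itT _ _ _) JT /MA /Mop /poly2rat IH exprS tofracM mulrA //.
Qed.

Lemma BJpe p x a : J (pe T p x) a = p%:F * J x a.
Proof.
rewrite /pe BJsum.
have hp : p = \sum_(i < size p) (p`_i)%:P * 'X^i.
  by rewrite -{1}(coefK p) poly_def; apply: eq_bigr => i _; rewrite mul_polyC.
rewrite [X in X%:F * J x a]hp rmorph_sum mulr_suml; apply: eq_bigr => i _.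
by rewrite BJit rmorphM mulrA.
Qed.

Lemma back : ~ exists L : X -> Prop,
       [/\ is_subspace L, nontrivial L, fin_dim L & @is_invariant X (fun x : X => T x) L].
Proof.
move=> [L [LS [x [Lx x0]] [s [sL sspan]] Linv]].
set n := size s.
have Lv : forall i, L (itT T i x).
  by elim=> [//|i IH]; rewrite /itT /= -/(itT _ _ _); apply: Linv.
have [C HC] := choice (fun (i : 'I_n.+1) => sspan _ (Lv i)).
pose M : 'M[k]_(n.+1, n) := \matrix_(i, j) C i j.
have rk : (0 < \rank (kermx M))%N.
  by rewrite mxrank_ker subn_gt0 ltnS rank_leq_col.
have [i ui] : exists i, row i (kermx M) != 0.
  apply: contrapT => h; move: rk; suff -> : kermx M = 0 by rewrite mxrank0.
  apply/row_matrixP => i; rewrite row0; apply/eqP; apply: contrapT => hi.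
  by apply: h; exists i; apply/negP.
set u := row i (kermx M) in ui.
have uM : u *m M = 0 by rewrite /u -row_mul mulmx_ker row0.
pose p := \poly_(j < n.+1) u 0 (inord j).
have p0 : p != 0.
  apply/eqP => hp; suff : u = 0 by move/eqP; rewrite (negbTE ui).
  apply/rowP => j; have := congr1 (fun q : {poly k} => q`_j) hp.
  by rewrite /= coef_poly ltn_ord coef0 inord_val /u !mxE.
have pe0 : pe T p x = 0.
  rewrite (pe_ext _ _ (size_poly _ _)).
  rewrite (eq_bigr (fun j : 'I_n.+1 => \sum_(l < n) (u 0 j * C j l) *: s`_l)); last first.
    by move=> j _; rewrite coef_poly ltn_ord inord_val HC scaler_sumr; apply: eq_bigr => l _; rewrite scalerA.
  rewrite exchange_big /= big1 // => l _; rewrite -scaler_suml.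
  have := congr1 (fun m : 'M[k]_(1, n) => m 0 l) uM; rewrite /= !mxE => h.
  suff -> : \sum_(i0 < n.+1) u 0 i0 * C i0 l = 0 by rewrite scale0r.
  rewrite -[RHS]h; apply: eq_bigr => j _. by rewrite /M !mxE.
apply: x0; apply: Jinj; rewrite BJ0; apply: funext => a.
have := BJpe p x a; rewrite pe0 BJ0 => /esym/eqP; rewrite mulf_eq0 tofrac_eq0 (negbTE p0) /=.
by move/eqP.
Qed.
End Back.

Theorem theorem1p4 (k : fieldType) (X : lmodType k) (T : {linear X -> X}) :
  (~ exists L : X -> Prop,
       [/\ is_subspace L, nontrivial L, fin_dim L & @is_invariant X (fun x : X => T x) L])
  <->
  (exists (A : Type) (Y : (A -> {fraction {poly k}}) -> Prop)
          (J : X -> A -> {fraction {poly k}}),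
     [/\ is_subspace_RA Y /\ is_invariant (@MA k A) Y,
         (forall (c : k) x y, J (c *: x + y) = (fun a => rscale c (J x a) + J y a)),
         (forall x, Y (J x)) /\ (forall f, Y f -> exists x, J x = f),
         (forall x y, J x = J y -> x = y) &
         (forall x, J (T x) = MA (J x))]).
Proof.
split.
- move=> H.
  have TF := torsion_free H.
  have [S [indS maxS]] := exists_max T.
  have spanS := span indS maxS.
  exists X, (fun f => exists x, J spanS x = f), (J spanS); split.
  + split; [split; [|split] |].
    * by move=> f [x <-]; exact: (J_fin indS spanS).
    * by exists 0; exact: (J0 indS spanS).
    * move=> c f g [x <-] [y <-]; exists (c *: x + y); exact: (J_lin indS spanS).
    * by move=> f [x <-]; exists (T x); exact: (J_T indS spanS).
  + exact: (J_lin indS spanS).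
  + by split; [move=> x; exists x | move=> f [x <-]; exists x].
  + exact: (@J_inj _ _ _ TF _ indS spanS).
  + exact: (J_T indS spanS).
- move=> [A [Y [J [_ Jlin _ Jinj JT]]]]; exact: (back Jlin Jinj JT).
Qed.
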